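(* Let $G=(V,E)$ be a bipartite graph with probabilities $p_e\in(0,1]$, and let $x$ be a feasible solution of (LP-BIP). Let $\hat E\subseteq E$ be a random set, and write $\hat x_e=\mathbf 1[e\in\hat E]$. Assume $\hat E$ satisfies: - (marginals) $\Pr[\hat x_e=1]=x_e$ for every $e\in E$; - (negative correlation) for every $v\in V$, every $S\subseteq\delta(v)$ and every $b\in\{0,1\}$, $\Pr[\bigwedge_{e\in S}\hat x_e=b]\le\prod_{e\in S}\Pr[\hat x_e=b]$. Independently of $\hat E$, draw independent random variables $Y_e$ for $e\in E$, where $Y_e$ takes values in $[0,\frac{1}{p_e}\ln\frac1{1-p_e}]$ and $\Pr[Y_e\le y]=\frac{1}{p_e}(1-e^{-p_e y})$ on that interval (for $p_e=1$ the interval is $[0,\infty)$). Run the following process: - consider the edges of $\hat E$ in increasing order of $Y_e$; - when edge $e$ is considered, probe it if no edge of $\hat\delta(e):=\delta(e)\cap\hat E$ has already been added to the matching; - a probed edge exists independently with probability $p_e$, and if it exists it is added to the matching. Call $e\in\hat E$ safe if, at the moment $e$ is considered, no edge of $\hat\delta(e)$ is in the matching. Then for every edge $e$, $$\Pr[e\text{ is safe}\mid e\in\hat E]\ \ge\ g(p_e),$$ where $g$ is the function defined in the context below.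
   Context: (LP-BIP) is the linear program in variables $x_e$, $e\in E$: maximize $\sum_{e\in E}w_ep_ex_e$ subject to - $\sum_{e\in\delta(v)}p_ex_e\le 1$ for all $v\in V$; - $\sum_{e\in\delta(v)}x_e\le t_v$ for all $v\in V$; - $0\le x_e\le 1$ for all $e\in E$. Here $\delta(v)$ is the set of edges incident to $v$, and for an edge $e$, $\delta(e)$ is the set of edges other than $e$ sharing an endpoint with $e$. The function $g$ is defined by $g(p)=\frac{1}{2+p}\bigl(1-\exp(-\frac{2+p}{p}\ln\frac{1}{1-p})\bigr)$ for $p\in(0,1)$, and $g(1)=\frac13$ (the limit as $p\to1$). *)

(* Defs.v *)
From HB Require Import structures.
From mathcomp Require Import all_boot all_order all_algebra.
From mathcomp Require Import all_classical all_reals all_analysis.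
Set Implicit Arguments. Unset Strict Implicit. Unset Printing Implicit Defensive.
Import Order.TTheory GRing.Theory Num.Theory.
Local Open Scope classical_set_scope.
Local Open Scope ring_scope.

Definition g (R : realType) (p : R) : R :=
  if p == 1 then 3^-1
  else (2 + p)^-1 * (1 - expR (- ((2 + p) / p * ln (1 - p)^-1))).

Section Graph.
Variables (R : realType) (V E : finType) (eu ew : E -> V).

Definition delta_v (v : V) : {set E} := [set e | (eu e == v) || (ew e == v)].

Definition delta_e (e : E) : {set E} :=
  [set f | (f != e) &&
     [|| eu f == eu e, eu f == ew e, ew f == eu e | ew f == ew e]].

(* The process, given the realized random set F (= hat E), the values
   y_e (= Y_e) and the existence coins c_e. Edges of F are considered in
   increasing order of y (ties, which have probability 0, are broken by
   the enumeration order of E). *)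
Definition ord_key (y : E -> R) (a b : E) : bool :=
  (y a < y b) || ((y a == y b) && (enum_rank a <= enum_rank b)%N).

Definition consider_order (y : E -> R) (F : {set E}) : seq E :=
  sort (ord_key y) (enum F).

(* One step: edge e is probed iff no edge of delta(e) (intersected with F;
   the matching is always a subset of F) is in the matching M; a probed edge
   is added iff it exists (c e). *)
Definition step (c : E -> bool) (M : {set E}) (e : E) : {set E} :=
  if [disjoint delta_e e & M] && c e then e |: M else M.

Definition matching_before (F : {set E}) (y : E -> R) (c : E -> bool) (e : E)
  : {set E} :=
  let s := consider_order y F in foldl (step c) (finset.set0 : {set E}) (take (index e s) s).

Definition safe (F : {set E}) (y : E -> R) (c : E -> bool) (e : E) : bool :=
  (e \in F) && [disjoint delta_e e :&: F & matching_before F y c e].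
End Graph.

(* Main.v *)
Require Import Defs.
From HB Require Import structures.
From mathcomp Require Import all_boot all_order all_algebra.
From mathcomp Require Import all_classical all_reals all_analysis.
From mathcomp Require Import ring lra.
Import Order.TTheory GRing.Theory Num.Theory.
Local Open Scope classical_set_scope.
Local Open Scope ring_scope.

Section Comb.
Variables (R : realType) (V E : finType) (eu ew : E -> V).

Lemma foldl_step_sub (c : E -> bool) (l : seq E) (M0 : {set E}) f :
  f \in foldl (step eu ew c) M0 l -> (f \in M0) || ((f \in l) && c f).
Proof.
elim: l M0 => [|a l IH] M0 /=; first by move=> ->.
move=> /IH /orP [H|/andP[fl cf]]; last by rewrite inE fl cf !orbT.
move: H; rewrite /step; case: ifP => [/andP[_ ca]|_]; last by move=> ->.
rewrite !inE => /orP[/eqP ->|->//]; by rewrite eqxx ca orbT.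
Qed.

Lemma ord_key_total (y : E -> R) : total (ord_key y).
Proof.
move=> a b; rewrite /ord_key; case: (ltgtP (y a) (y b)) => //= Hab.
by rewrite ?eqxx /= ?leq_total ?orbT.
Qed.

Lemma ord_key_trans (y : E -> R) : transitive (ord_key y).
Proof.
move=> b a c; rewrite /ord_key => /orP[H1|/andP[/eqP H1 H1']] /orP[H2|/andP[/eqP H2 H2']].
- by rewrite (lt_trans H1 H2).
- by rewrite -H2 H1.
- by rewrite H1 H2.
- by rewrite H1 H2 eqxx (leq_trans H1' H2') orbT.
Qed.

Lemma ord_key_le (y : E -> R) a b : ord_key y a b -> y a <= y b.
Proof. by rewrite /ord_key => /orP[/ltW //|/andP[/eqP -> _]]. Qed.

Lemma safe_suff (F : {set E}) (y : E -> R) (c : E -> bool) (e : E) :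
  e \in F ->
  (forall f, f \in delta_e eu ew e -> f \in F -> c f -> y e < y f) ->
  safe eu ew F y c e.
Proof.
move=> eF H; rewrite /safe eF /=.
rewrite disjoint_subset; apply/fintype.subsetP => f; rewrite inE => /andP[fd fF].
rewrite inE; apply/negP => fM.
move: fM; rewrite /matching_before => /foldl_step_sub.
rewrite inE /= => /andP[ft cf].
set s := consider_order y F in ft.
have fs : f \in s by rewrite mem_sort mem_enum.
have es : e \in s by rewrite mem_sort mem_enum.
rewrite in_take // in ft.
have srt : sorted (ord_key y) s by apply: sort_sorted; apply: ord_key_total.
have := sorted_ltn_index (@ord_key_trans y) srt f e fs es ft.
move/ord_key_le; have := H f fd fF cf.
by move=> /lt_le_trans h /h; rewrite ltxx.
Qed.
End Comb.

Module Prob.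

Section Prob.
Context {R : realType} {d : measure_display} {Omega : measurableType d} (P : probability Omega R).

Definition mu (A : set Omega) : R := fine (P A).

Lemma mu_ge0 A : 0 <= mu A.
Proof. by apply: fine_ge0; apply: measure_ge0. Qed.

Lemma muE A : measurable A -> P A = (mu A)%:E.
Proof. by move=> mA; rewrite /mu fineK // fin_num_measure. Qed.

Lemma mu_le A B : measurable A -> measurable B -> A `<=` B -> mu A <= mu B.
Proof.
move=> mA mB AB; rewrite -lee_fin -!muE //.
by apply: le_measure => //; rewrite inE.
Qed.

Lemma mu_le1 A : measurable A -> mu A <= 1.
Proof. by move=> mA; rewrite -lee_fin -muE // probability_le1. Qed.

Lemma mu_setC A : measurable A -> mu (~` A) = 1 - mu A.
Proof.
move=> mA; apply/eqP; rewrite -eqe -muE; last exact: measurableC.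
by rewrite probability_setC // muE.
Qed.

Lemma bigU_memP (I : eqType) (A : I -> set Omega) (s : seq I) w :
  (\big[setU/set0]_(i <- s) A i) w <-> exists i, i \in s /\ A i w.
Proof.
elim: s => [|a s IH]; first by rewrite big_nil; split => // -[i []].
rewrite big_cons; split.
  case=> [Aw|/IH [i [iS Aiw]]]; first by exists a; rewrite mem_head.
  by exists i; rewrite in_cons iS orbT.
move=> [i []]; rewrite in_cons => /orP[/eqP ->|iS Aiw]; first by left.
by right; apply/IH; exists i.
Qed.

Lemma mu_bigU_seq (I : eqType) (A : I -> set Omega) (s : seq I) :
  uniq s -> (forall i, measurable (A i)) ->
  (forall i j w, A i w -> A j w -> i = j) ->
  mu (\big[setU/set0]_(i <- s) A i) = \sum_(i <- s) mu (A i).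
Proof.
move=> us mA dA; elim: s us => [|a s IH] /=; first by rewrite !big_nil /mu measure0.
move=> /andP[aS us]; rewrite !big_cons -IH //.
have mB : measurable (\big[setU/set0]_(i <- s) A i) by apply: bigsetU_measurable.
apply/eqP; rewrite -eqe EFinD -!muE //; last exact: measurableU.
rewrite measureU //; apply/seteqP; split => // w [Aw].
move=> /bigU_memP [j [js Ajw]].
by move: aS; rewrite (dA _ _ _ Aw Ajw) js.
Qed.

Lemma mu_sumU (I : finType) (A : I -> set Omega) (B : set Omega) :
  (forall i, measurable (A i)) ->
  (forall i j w, A i w -> A j w -> i = j) ->
  (forall w, B w <-> exists i, A i w) ->
  mu B = \sum_i mu (A i).
Proof.
move=> mA dA BA.
have -> : B = \big[setU/set0]_(i <- enum I) A i.
  apply/seteqP; split => w.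
    by move=> /BA [i Aiw]; apply/bigU_memP; exists i; rewrite mem_enum.
  by move=> /bigU_memP [i [_ Aiw]]; apply/BA; exists i.
by rewrite mu_bigU_seq ?enum_uniq // big_enum.
Qed.

Lemma mforall (I : finType) (Q : I -> Omega -> Prop) :
  (forall i, measurable [set w | Q i w]) -> measurable [set w | forall i, Q i w].
Proof.
move=> mQ; have -> : [set w | forall i, Q i w] = \bigcap_(i in [set: I]) [set w | Q i w].
  apply/seteqP; split => w /= H i; first by move=> _; apply: H.
  by apply: H.
by apply: fin_bigcap_measurable => //; apply: finite_finset.
Qed.

Lemma mexists (I : finType) (Q : I -> Omega -> Prop) :
  (forall i, measurable [set w | Q i w]) -> measurable [set w | exists i, Q i w].
Proof.
move=> mQ; have -> : [set w | exists i, Q i w] = \bigcup_(i in [set: I]) [set w | Q i w].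
  by apply/seteqP; split => w /= [i]; exists i.
by apply: fin_bigcup_measurable => //; apply: finite_finset.
Qed.

End Prob.

End Prob.
Import Prob.

Section Calc.
Context (R : realType).


Lemma final_sum (q h : R) (n : nat) : 0 < q -> 0 < h ->
  expR (- ((q + 2) * h)) * (1 - expR (- ((q + 2) * (n%:R * h)))) / (q + 2) <=
  \sum_(k < n) ((q^-1 * (1 - expR (- (q * (k.+1%:R * h))))
                 - q^-1 * (1 - expR (- (q * (k%:R * h)))))
                * expR (- (2 * (k.+1%:R * h)))).
Proof.
move=> q0 h0.
set u := expR (- (q * h)); set v := expR (- (2 * h)).
have u0 : 0 < u by rewrite expR_gt0.
have v0 : 0 < v by rewrite expR_gt0.
have Eu k : expR (- (q * (k%:R * h))) = u ^+ k.
  by rewrite -expRM_natl; congr expR; ring.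
have Ev k : expR (- (2 * (k%:R * h))) = v ^+ k.
  by rewrite -expRM_natl; congr expR; ring.
have Er : expR (- ((q + 2) * h)) = u * v.
  by rewrite -expRD; congr expR; ring.
have Ern k : expR (- ((q + 2) * (k%:R * h))) = (u * v) ^+ k.
  by rewrite -Er -expRM_natl; congr expR; ring.
have H1 : q * h * u <= 1 - u.
  have E : expR (q * h) * u = 1 by rewrite /u -expRD addrN expR0.
  have : (1 + q * h) * u <= expR (q * h) * u by apply: ler_wpM2r; [exact: ltW | exact: expR_ge1Dx].
  rewrite E; lra.
have H2 : 1 - u * v <= (q + 2) * h.
  have := expR_ge1Dx (- ((q + 2) * h)); rewrite Er; lra.
have key : u * (1 - u * v) / (q + 2) <= (1 - u) / q.
  rewrite ler_pdivrMr ?addr_gt0 // mulrAC ler_pdivlMr //.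
  have : u * (1 - u * v) * q <= u * ((q + 2) * h) * q.
    by apply: ler_wpM2r; [exact: ltW| apply: ler_wpM2l => //; exact: ltW].
  have : q * h * u * (q + 2) <= (1 - u) * (q + 2).
    by apply: ler_wpM2r => //; apply: ltW; rewrite addr_gt0.
  nra.
have term k : ((u * v) ^+ k.+1 - (u * v) ^+ k.+2) / (q + 2) <=
   (q^-1 * (1 - u ^+ k.+1) - q^-1 * (1 - u ^+ k)) * v ^+ k.+1.
  have -> : ((u * v) ^+ k.+1 - (u * v) ^+ k.+2) / (q + 2) =
            u ^+ k * v ^+ k.+1 * (u * (1 - u * v) / (q + 2)).
    by rewrite !exprS !exprMn; field; rewrite gt_eqF ?addr_gt0.
  have -> : (q^-1 * (1 - u ^+ k.+1) - q^-1 * (1 - u ^+ k)) * v ^+ k.+1 =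
            u ^+ k * v ^+ k.+1 * ((1 - u) / q).
    by rewrite !exprS; field; rewrite gt_eqF.
  apply: ler_wpM2l => //; by rewrite mulr_ge0 // exprn_ge0 // ltW.
under eq_bigr => k _ do rewrite !Eu Ev.
apply: (le_trans _ (ler_sum _ (fun (k : 'I_n) _ => term k))).
rewrite -(big_mkord xpredT (fun k => ((u * v) ^+ k.+1 - (u * v) ^+ k.+2) / (q + 2))).
rewrite -mulr_suml.
rewrite (telescope_sumr_eq (fun k => - (u * v) ^+ k.+1)) //; last first.
  by move=> k _; ring.
rewrite Er Ern le_eqVlt; apply/orP; left; apply/eqP. rewrite exprS expr1; set w := (u * v) ^+ n; ring.
Qed.
End Calc.

Section Main.
Context (R : realType) (V E : finType) (eu ew : E -> V)
  (p : E -> R) (Hp : forall e, 0 < p e <= 1) (x : E -> R)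
  (d : measure_display) (Omega : measurableType d) (P : probability Omega R)
  (Ehat : Omega -> {set E}) (Y : E -> Omega -> R) (c : E -> Omega -> bool)
  (HEm : forall F : {set E}, measurable [set w | Ehat w = F])
  (HYm : forall e, measurable_fun setT (Y e))
  (Hcm : forall e b, measurable [set w | c e w = b])
  (Hmarg : forall e, P [set w | e \in Ehat w] = (x e)%:E)
  (HYdist : forall e (y : R), 0 <= y ->
     (p e < 1 -> y <= (p e)^-1 * ln (1 - p e)^-1) ->
     P [set w | Y e w <= y] = ((p e)^-1 * (1 - expR (- (p e * y))))%:E)
  (Hc : forall e, P [set w | c e w = true] = (p e)%:E)
  (Hindep : forall (F : {set E}) (B : E -> set R) (b : E -> bool),
     (forall f, measurable (B f)) ->
     P [set w | Ehat w = F /\ (forall f, B f (Y f w)) /\ (forall f, c f w = b f)]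
     = (fine (P [set w | Ehat w = F])
        * \prod_f fine (P [set w | B f (Y f w)])
        * \prod_f fine (P [set w | c f w = b f]))%:E)
  (Hx1 : forall v, \sum_(e in delta_v eu ew v) p e * x e <= 1)
  (Hx3 : forall e, 0 <= x e <= 1)
  (Hnc : forall (v : V) (S : {set E}) (b : bool), S \subset delta_v eu ew v ->
     fine (P [set w | forall f, f \in S -> (f \in Ehat w) = b])
       <= \prod_(f in S) fine (P [set w | (f \in Ehat w) = b]))
  (e : E).

Local Notation mu := (mu P).
Local Notation A F := (delta_e eu ew e :&: F).

Lemma mconst (Pr : Prop) : measurable [set _ : Omega | Pr].
Proof.
case: (pselect Pr) => H.
  by have -> : [set _ : Omega | Pr] = setT by apply/seteqP; split.
by have -> : [set _ : Omega | Pr] = set0 by apply/seteqP; split.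
Qed.

Lemma mY_itv f (i : interval R) : measurable [set w | Y f w \in i].
Proof. have := HYm f measurableT _ (measurable_itv i); rewrite setTI; exact. Qed.

Lemma mY_le f y : measurable [set w | Y f w <= y].
Proof.
have -> : [set w | Y f w <= y] = [set w | Y f w \in `]-oo, y]].
  by apply/seteqP; split => w /=; rewrite in_itv.
exact: mY_itv.
Qed.

Lemma mu_cfalse f : mu [set w | c f w = false] = 1 - p f.
Proof.
have -> : [set w | c f w = false] = ~` [set w | c f w = true].
  by apply/seteqP; split => w /=; case: (c f w).
by rewrite mu_setC // /mu Hc.
Qed.

Lemma mu_ctrue f : mu [set w | c f w = true] = p f.
Proof. by rewrite /mu Hc. Qed.

Lemma mu_T (Q : R -> Prop) (HQ : forall r, Q r) f : mu [set w | Q (Y f w)] = 1.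
Proof.
have -> : [set w | Q (Y f w)] = setT by apply/seteqP; split => w //= _; apply: HQ.
by rewrite /mu probability_setT.
Qed.

Definition Bf (F : {set E}) (a b : R) (f : E) (bt : bool) : set R :=
  if f == e then [set r | r \in `]a, b]]
  else if (f \in A F) && bt then [set r | r \in `]b, +oo[] else setT.

Lemma mBf F a b f bt : measurable (Bf F a b f bt).
Proof.
rewrite /Bf; case: ifP => _; first exact: measurable_itv.
by case: ifP => _; [exact: measurable_itv | exact: measurableT].
Qed.

Lemma mBfY F a b f bt : measurable [set w | Bf F a b f bt (Y f w)].
Proof.
rewrite /Bf; case: ifP => _; first exact: mY_itv.
case: ifP => _; first exact: mY_itv.
by have -> : [set w | [set: R] (Y f w)] = setT by apply/seteqP; split.
Qed.

Definition S (F : {set E}) (a b : R) : set Omega :=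
  [set w | Ehat w = F /\ (a < Y e w <= b) /\
     (forall f, f \in A F -> c f w -> b < Y f w)].

Lemma notin_A F : e \notin A F.
Proof. by rewrite !inE eqxx. Qed.

Lemma S_decomp F a b : mu (S F a b) =
  \sum_(bt : {ffun E -> bool}) mu [set w | Ehat w = F /\
      (forall f, Bf F a b f (bt f) (Y f w)) /\ (forall f, c f w = bt f)].
Proof.
apply: mu_sumU.
- move=> bt; apply: measurableI; first exact: HEm.
  apply: measurableI; apply: mforall => f; [exact: mBfY | exact: Hcm].
- move=> b1 b2 w [_ [_ H1]] [_ [_ H2]]; apply/ffunP => f.
  by rewrite -H1 -H2.
- move=> w; split.
    move=> [EF [Ie HA]]; exists [ffun f => c f w]; split => //; split; last first.
      by move=> f; rewrite ffunE.
    move=> f; rewrite ffunE /Bf; case: ifP => [/eqP ->|fe]; first by rewrite /= in_itv.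
    case: ifP => // /andP[fA cf] /=; rewrite in_itv /= andbT.
    by apply: HA => //; rewrite -EF.
  move=> [bt [EF [HB Hcb]]]; split => //; split.
    by have := HB e; rewrite /Bf eqxx /= in_itv.
  move=> f fA cf; have := HB f; rewrite /Bf.
  have fe : (f == e) = false.
    by apply/eqP => fe; move: fA; rewrite fe (negbTE (notin_A F)).
  by rewrite fe fA -Hcb cf /= in_itv /= andbT.
Qed.

Lemma S_factor F a b : mu (S F a b) = mu [set w | Ehat w = F] *
  \prod_f (\sum_(bt0 : bool)
     (mu [set w | Bf F a b f bt0 (Y f w)] * mu [set w | c f w = bt0])).
Proof.
rewrite S_decomp.
have H (bt : {ffun E -> bool}) : mu [set w | Ehat w = F /\
      (forall f, Bf F a b f (bt f) (Y f w)) /\ (forall f, c f w = bt f)] =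
    fine (P [set w | Ehat w = F]) * \prod_f fine (P [set w | Bf F a b f (bt f) (Y f w)])
     * \prod_f fine (P [set w | c f w = bt f]).
  by rewrite /Prob.mu (Hindep F (fun f => Bf F a b f (bt f)) bt) //; move=> f; apply: mBf.
rewrite (eq_bigr _ (fun bt _ => H bt)).
rewrite (bigA_distr_bigA (fun f bt0 => fine (P [set w | Bf F a b f bt0 (Y f w)]) *
                                     fine (P [set w | c f w = bt0]))) /=.
rewrite mulr_sumr; apply: eq_bigr => bt _.
by rewrite -mulrA -big_split.
Qed.


Lemma mu_itv f a b : a <= b ->
  mu [set w | Y f w \in `]a, b]] = mu [set w | Y f w <= b] - mu [set w | Y f w <= a].
Proof.
move=> ab.
have -> : [set w | Y f w <= b] = [set w | Y f w \in `]a, b]] `|` [set w | Y f w <= a].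
  apply/seteqP; split => w /=; rewrite in_itv /=.
    by case: (ltP a (Y f w)) => H /= H2; [left | right].
  by case=> [/andP[_ ->]//|H]; apply: le_trans H ab.
have : P ([set w | Y f w \in `]a, b]] `|` [set w | Y f w <= a]) =
   P [set w | Y f w \in `]a, b]] + P [set w | Y f w <= a].
  apply: measureU; [exact: (mY_itv f `]a, b]) | exact: (mY_le f a) |].
  apply/seteqP; split => w //= [+ H]; rewrite in_itv /= => /andP[H1 _].
  by move: (lt_le_trans H1 H); rewrite ltxx.
move=> HU; apply: EFin_inj; rewrite EFinB -!muE.
- by rewrite HU addeK // fin_num_measure //; exact: mY_le.
- exact: mY_le.
- by apply: measurableU; [exact: mY_itv|exact: mY_le].
- exact: mY_itv.
Qed.

Definition L (f : E) : R := (p f)^-1 * ln (1 - p f)^-1.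

Lemma expR_L f : p f < 1 -> expR (- (p f * L f)) = 1 - p f.
Proof.
move=> pf1; have pf0 : 0 < p f by case/andP: (Hp f).
rewrite /L mulrA mulfV ?gt_eqF // mul1r lnV ?posrE ?subr_gt0 // opprK.
by rewrite lnK // posrE subr_gt0.
Qed.

Lemma Ytail_lb f b : 0 <= b -> expR (- (p f * b)) <= 1 - p f * mu [set w | Y f w <= b].
Proof.
move=> b0; have /andP[pf0 pf1] := Hp f.
have [/andP[pl1 bL']|] := boolP ((p f < 1) && (L f < b)).
  have : mu [set w | Y f w <= b] <= 1 by apply: mu_le1; exact: mY_le.
  move=> H; have : expR (- (p f * b)) <= 1 - p f.
    rewrite -expR_L // ler_expR lerN2; apply: ler_wpM2l; [exact: ltW | exact: ltW].
  nra.
rewrite negb_and -leNgt -leNgt => H.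
rewrite /mu HYdist //=; last by move=> pl; case/orP: H; [move=> /(lt_le_trans pl); rewrite ltxx | ].
by rewrite mulrA mulfV ?gt_eqF // mul1r opprB addrCA subrr addr0.
Qed.

Definition s (F : {set E}) : R := \sum_(f in A F) p f.

Lemma mu_gt f b : mu [set w | Y f w \in `]b, +oo[] = 1 - mu [set w | Y f w <= b].
Proof.
rewrite -mu_setC; last exact: mY_le.
congr mu; apply/seteqP; split => w /=; rewrite in_itv /= andbT.
  by move=> H1 H2; move: (lt_le_trans H1 H2); rewrite ltxx.
by move/negP; rewrite -ltNge.
Qed.

Lemma S_lb F a b : 0 <= a <= b ->
  mu [set w | Ehat w = F] * (mu [set w | Y e w \in `]a, b]] * expR (- (b * s F)))
  <= mu (S F a b).
Proof.
move=> /andP[a0 ab]; have b0 : 0 <= b := le_trans a0 ab.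
rewrite S_factor.
pose lb f := if f == e then mu [set w | Y e w \in `]a, b]]
             else if f \in A F then expR (- (p f * b)) else 1.
have -> : mu [set w | Y e w \in `]a, b]] * expR (- (b * s F)) = \prod_f lb f.
  rewrite (bigD1 e) //= /lb eqxx; congr (_ * _).
  rewrite /s mulr_sumr -sumrN expR_sum big_mkcond [RHS]big_mkcond /=.
  apply: eq_bigr => f _; case: (eqVneq f e) => [->|fe].
    by rewrite (negbTE (notin_A F)).
  by rewrite /= mulrC.
apply: ler_wpM2l; first exact: mu_ge0.
apply: ler_prod => f _; apply/andP; split.
  rewrite /lb; case: ifP => _; first exact: mu_ge0.
  by case: ifP => _ //; rewrite ltW // expR_gt0.
rewrite big_bool /= mu_ctrue mu_cfalse /lb /Bf.
case: (eqVneq f e) => [->|fe] /=.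
  by rewrite -mulrDr addrC subrK mulr1.
case: ifP => fA /=.
  rewrite mu_gt (mu_T (fun r => [set: R] r)) // mul1r.
  have := Ytail_lb f b b0; lra.
by rewrite !(mu_T (fun r => [set: R] r)) // !mul1r addrC subrK.
Qed.

Lemma sum_EF (Q : pred {set E}) :
  \sum_(F : {set E}) (if Q F then mu [set w | Ehat w = F] else 0) = mu [set w | Q (Ehat w)].
Proof.
rewrite (@mu_sumU _ _ _ P _ (fun F => [set w | Ehat w = F /\ Q F])).
- apply: eq_bigr => F _; case: ifP => QF.
    by congr (Prob.mu P _); apply/seteqP; split => w /=; [| case].
  have -> : [set w | Ehat w = F /\ false] = set0.
    by apply/seteqP; split => w //= [_].
  by rewrite /Prob.mu measure0.
- by move=> F; apply: measurableI; [exact: HEm | exact: mconst].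
- by move=> i j w [<- _] [<- _].
- by move=> w; split => [Qw|[F [<- //]]]; exists (Ehat w).
Qed.

Lemma delta_e_v f : f \in delta_e eu ew e ->
  exists v, e \in delta_v eu ew v /\ f \in delta_v eu ew v.
Proof.
rewrite !inE => /andP[_ /or4P[]] /eqP H;
  [exists (eu e) | exists (ew e) | exists (eu e) | exists (ew e)];
  by rewrite !inE H !eqxx ?orbT.
Qed.

Lemma pair_bound f : f \in delta_e eu ew e ->
  mu [set w | (e \in Ehat w) && (f \in Ehat w)] <= x e * x f.
Proof.
move=> fd; have [v [ev fv]] := delta_e_v f fd.
have fe : f != e by move: fd; rewrite !inE => /andP[].
have sub : [set e; f]%SET \subset delta_v eu ew v.
  by apply/fintype.subsetP => g; rewrite in_set2 => /orP[] /eqP ->.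
have := Hnc _ _ true sub.
have -> : [set w | forall g, g \in [set e; f]%SET -> (g \in Ehat w) = true] =
          [set w | (e \in Ehat w) && (f \in Ehat w)].
  apply/seteqP; split => w /=.
    by move=> H; rewrite (H e) ?(H f) // !inE eqxx ?orbT.
  by move=> /andP[H1 H2] g; rewrite !inE => /orP[] /eqP ->.
rewrite big_setU1 ?inE 1?eq_sym // big_set1.
have Hm g : P [set w | (g \in Ehat w) = true] = (x g)%:E := Hmarg g.
by rewrite !Hm.
Qed.

Lemma p_ge0 f : 0 <= p f. Proof. by case/andP: (Hp f) => /ltW. Qed.
Lemma x_ge0 f : 0 <= x f. Proof. by case/andP: (Hx3 f). Qed.

Lemma sum_delta_e : \sum_(f in delta_e eu ew e) p f * x f <= 2.
Proof.
apply: (@le_trans _ _ (\sum_(f in delta_v eu ew (eu e)) p f * x f +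
                        \sum_(f in delta_v eu ew (ew e)) p f * x f)); last first.
  by have := Hx1 (eu e); have := Hx1 (ew e); lra.
rewrite big_mkcond [X in _ <= X + _]big_mkcond [X in _ <= _ + X]big_mkcond -big_split /=.
apply: ler_sum => f _; have g0 : 0 <= p f * x f by rewrite mulr_ge0 ?p_ge0 ?x_ge0.
case: ifP => fd; last by rewrite addr_ge0 //; case: ifP.
move: fd; rewrite !inE => /andP[_ /or4P[]] /eqP H; rewrite H !eqxx ?orbT /=;
  case: ifP => _; lra.
Qed.

Lemma sum_s_bound : \sum_(F : {set E}) (if e \in F then mu [set w | Ehat w = F] * s F else 0) <= 2 * x e.
Proof.
have -> : \sum_(F : {set E}) (if e \in F then mu [set w | Ehat w = F] * s F else 0) =
  \sum_(F : {set E}) \sum_(f in delta_e eu ew e) p f *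
     (if (e \in F) && (f \in F) then mu [set w | Ehat w = F] else 0).
  apply: eq_bigr => F _; case: ifP => eF /=; last by rewrite big1 // => f _; rewrite mulr0.
  rewrite /s mulr_sumr.
  transitivity (\sum_(f in delta_e eu ew e | f \in F) p f * mu [set w | Ehat w = F]).
    by apply: eq_big => [f|f _]; [rewrite inE | rewrite mulrC].
  rewrite big_mkcondr /=; apply: eq_bigr => f _; case: ifP => _; by rewrite ?mulr0.
rewrite exchange_big /=.
under eq_bigr => f _ do rewrite -mulr_sumr (sum_EF (fun F => (e \in F) && (f \in F))).
apply: (@le_trans _ _ (\sum_(f in delta_e eu ew e) p f * (x e * x f))).
  apply: ler_sum => f fd; apply: ler_wpM2l; first exact: p_ge0.
  exact: pair_bound.
under eq_bigr => f _ do rewrite mulrCA.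
rewrite -mulr_sumr mulrC; apply: ler_wpM2r; first exact: x_ge0.
exact: sum_delta_e.
Qed.

Lemma sum_EF_e : \sum_(F : {set E}) (if e \in F then mu [set w | Ehat w = F] else 0) = x e.
Proof. by rewrite (sum_EF (fun F => e \in F)) /Prob.mu Hmarg. Qed.

Lemma jensen y : 0 <= y ->
  expR (- (2 * y)) * x e <=
  \sum_(F : {set E}) (if e \in F then mu [set w | Ehat w = F] * expR (- (y * s F)) else 0).
Proof.
move=> y0; set K := expR (- (2 * y)).
have K0 : 0 < K by rewrite expR_gt0.
apply: (@le_trans _ _ (\sum_(F : {set E}) (K * (1 + 2 * y) * (if e \in F then mu [set w | Ehat w = F] else 0)
      - K * y * (if e \in F then mu [set w | Ehat w = F] * s F else 0)))); last first.
  apply: ler_sum => F _; case: ifP => eF; last by rewrite !mulr0 subr0.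
  have hm := mu_ge0 P [set w | Ehat w = F].
  have : K * (1 - (y * s F - 2 * y)) <= expR (- (y * s F)).
    have -> : expR (- (y * s F)) = K * expR (- (y * s F - 2 * y)).
      by rewrite -expRD; congr expR; ring.
    apply: ler_wpM2l; first exact: ltW.
    by have := expR_ge1Dx (- (y * s F - 2 * y)); rewrite opprB addrC -opprB.
  move=> H.
  have : mu [set w | Ehat w = F] * (K * (1 - (y * s F - 2 * y))) <=
         mu [set w | Ehat w = F] * expR (- (y * s F)) by apply: ler_wpM2l.
  move=> H2; apply: le_trans H2; rewrite le_eqVlt; apply/orP; left; apply/eqP; ring.
rewrite sumrB -!mulr_sumr sum_EF_e.
have := sum_s_bound.
set Sm := \sum_(F : {set E}) _ => HS.
have : K * y * Sm <= K * y * (2 * x e) by apply: ler_wpM2l => //; rewrite mulr_ge0 // ltW.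
lra.
Qed.

Lemma mb_or (b1 b2 : Omega -> bool) : measurable [set w | b1 w] ->
  measurable [set w | b2 w] -> measurable [set w | b1 w || b2 w].
Proof.
move=> m1 m2; have -> : [set w | b1 w || b2 w] = [set w | b1 w] `|` [set w | b2 w].
  by apply/seteqP; split => w /=; [move/orP | move=> /orP].
exact: measurableU.
Qed.

Lemma mb_and (b1 b2 : Omega -> bool) : measurable [set w | b1 w] ->
  measurable [set w | b2 w] -> measurable [set w | b1 w && b2 w].
Proof.
move=> m1 m2; have -> : [set w | b1 w && b2 w] = [set w | b1 w] `&` [set w | b2 w].
  by apply/seteqP; split => w /=; [move/andP | move=> /andP].
exact: measurableI.
Qed.

Lemma mb_eq (b1 : Omega -> bool) bt : measurable [set w | b1 w] ->
  measurable [set w | b1 w = bt].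
Proof.
move=> m1; case: bt => //.
have -> : [set w | b1 w = false] = ~` [set w | b1 w].
  by apply/seteqP; split => w /=; case: (b1 w).
exact: measurableC.
Qed.

Lemma mb_lt f g : measurable [set w | Y f w < Y g w].
Proof.
have := measurable_realfun.measurable_funB (HYm g) (HYm f) measurableT (measurable_itv `]0, +oo[).
rewrite setTI.
have -> : [set w | Y f w < Y g w] = (Y g \- Y f) @^-1` [set` `]0, +oo[].
  by apply/seteqP; split => w /=; rewrite in_itv /= andbT subr_gt0.
exact.
Qed.

Lemma mb_eqY f g : measurable [set w | Y f w == Y g w].
Proof.
have -> : [set w | Y f w == Y g w] = ~` ([set w | Y f w < Y g w] `|` [set w | Y g w < Y f w]).
  apply/seteqP; split => w /=.
    by move=> /eqP ->; rewrite ltxx => -[].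
  by case: (ltgtP (Y f w) (Y g w)) => // H; case; [left|right].
by apply: measurableC; apply: measurableU; apply: mb_lt.
Qed.

Lemma mb_key a b bt : measurable [set w | ord_key (fun f => Y f w) a b = bt].
Proof.
apply: mb_eq; rewrite /ord_key; apply: mb_or; first exact: mb_lt.
apply: mb_and; first exact: mb_eqY.
exact: mconst.
Qed.

Definition safeK (F : {set E}) (K : {ffun E * E -> bool}) (cv : {ffun E -> bool}) : bool :=
  let sq := sort (fun a b => K (a, b)) (enum F) in
  (e \in F) && [disjoint delta_e eu ew e :&: F &
     foldl (step eu ew cv) (finset.set0 : {set E}) (take (index e sq) sq)].

Lemma safeKE w : safe eu ew (Ehat w) (fun f => Y f w) (fun f => c f w) e =
  safeK (Ehat w) [ffun ab => ord_key (fun f => Y f w) ab.1 ab.2] [ffun f => c f w].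
Proof.
rewrite /safe /safeK /matching_before /consider_order.
have -> : (fun a b => [ffun ab => ord_key (fun f => Y f w) ab.1 ab.2] (a, b))
          = ord_key (fun f => Y f w).
  by apply: boolp.funext => a; apply: boolp.funext => b; rewrite ffunE.
have -> : ([ffun f => c f w] : E -> bool) = (fun f => c f w).
  by apply: boolp.funext => f; rewrite ffunE.
by [].
Qed.

Lemma m_safe : measurable
  [set w | safe eu ew (Ehat w) (fun f => Y f w) (fun f => c f w) e].
Proof.
pose T3 := ({set E} * {ffun E * E -> bool} * {ffun E -> bool})%type.
have -> : [set w | safe eu ew (Ehat w) (fun f => Y f w) (fun f => c f w) e] =
  [set w | exists t : T3, safeK t.1.1 t.1.2 t.2 /\ (Ehat w = t.1.1 /\
     (forall ab : E * E, ord_key (fun f => Y f w) ab.1 ab.2 = t.1.2 ab) /\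
     (forall f, c f w = t.2 f))].
  apply/seteqP; split => w /=.
    rewrite safeKE => H.
    exists (Ehat w, [ffun ab => ord_key (fun f => Y f w) ab.1 ab.2], [ffun f => c f w]).
    by split => //=; split => //; split => ?; rewrite ffunE.
  move=> [[[F K] cv] /= [H [EF [HK Hc']]]].
  rewrite safeKE EF.
  have -> : [ffun ab => ord_key (fun f => Y f w) ab.1 ab.2] = K.
    by apply/ffunP => ab; rewrite ffunE HK.
  have -> : [ffun f => c f w] = cv by apply/ffunP => f; rewrite ffunE Hc'.
  exact: H.
apply: mexists => t; apply: measurableI; first exact: mconst.
apply: measurableI; first exact: HEm.
apply: measurableI; apply: mforall => ?; [exact: mb_key | exact: Hcm].
Qed.

Lemma mb_not (b1 : Omega -> bool) : measurable [set w | b1 w] ->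
  measurable [set w | ~~ b1 w].
Proof.
move=> m1; have -> : [set w | ~~ b1 w] = ~` [set w | b1 w].
  by apply/seteqP; split => w /=; case: (b1 w).
exact: measurableC.
Qed.

Lemma mS F a b : measurable (S F a b).
Proof.
have -> : S F a b = [set w | Ehat w = F] `&` ([set w | Y e w \in `]a, b]] `&`
   [set w | forall f, (f \in A F) ==> (c f w ==> (Y f w \in `]b, +oo[))]).
  apply/seteqP; split => w /=.
    move=> [EF [Ie HA]]; split => //; split; first by rewrite in_itv.
    move=> f; apply/implyP => fA; apply/implyP => cf.
    by rewrite in_itv /= andbT; apply: HA.
  move=> [EF [Ie HA]]; split => //; split; first by move: Ie; rewrite in_itv.
  move=> f fA cf; have := HA f; rewrite fA cf /= in_itv /= andbT; exact.
apply: measurableI; first exact: HEm.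
apply: measurableI; first exact: mY_itv.
apply: mforall => f.
have E1 : forall w, ((f \in A F) ==> (c f w ==> (Y f w \in `]b, +oo[))) =
   ~~ (f \in A F) || (~~ c f w || (Y f w \in `]b, +oo[)).
  by move=> w; rewrite !implybE.
have -> : [set w | (f \in A F) ==> (c f w ==> (Y f w \in `]b, +oo[))] =
          [set w | ~~ (f \in A F) || (~~ c f w || (Y f w \in `]b, +oo[))].
  by apply/seteqP; split => w /=; rewrite E1.
apply: mb_or; first exact: mconst.
apply: mb_or; last exact: mY_itv.
by apply: mb_not; exact: (Hcm f true).
Qed.

Lemma interval_unique (h y : R) (k j : nat) : 0 < h ->
  k%:R * h < y <= k.+1%:R * h -> j%:R * h < y <= j.+1%:R * h -> k = j.
Proof.
move=> h0 /andP[k1 k2] /andP[j1 j2].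
have aux (a b : nat) : (a < b)%N -> a%:R * h < y -> y <= a.+1%:R * h ->
    b%:R * h < y -> False.
  move=> ab _ H2 H3; have : a.+1%:R * h <= b%:R * h.
    by apply: ler_wpM2r; [exact: ltW | rewrite ler_nat].
  move=> H; have := lt_le_trans H3 (le_trans H2 H); by rewrite ltxx.
case: (ltngtP k j) => // H; first by case: (aux _ _ H k1 k2 j1).
by case: (aux _ _ H j1 j2 k1).
Qed.

Lemma Delta_eq (h : R) (n : nat) (k : 'I_n) : 0 < h -> (p e < 1 -> n%:R * h <= L e) ->
  mu [set w | Y e w \in `]k%:R * h, k.+1%:R * h]] =
  (p e)^-1 * (1 - expR (- (p e * (k.+1%:R * h))))
  - (p e)^-1 * (1 - expR (- (p e * (k%:R * h)))).
Proof.
move=> h0 HL.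
have kk : k%:R * h <= k.+1%:R * h by apply: ler_wpM2r; [exact: ltW | rewrite ler_nat].
have kn : k.+1%:R * h <= n%:R * h by apply: ler_wpM2r; [exact: ltW | rewrite ler_nat].
rewrite mu_itv // /Prob.mu !HYdist //=.
all: try by rewrite mulr_ge0 // ltW.
all: move=> /HL; rewrite /L => H; apply: le_trans H.
all: by [exact: kn | exact: (le_trans kk kn)].
Qed.

Lemma main_lb (n : nat) (h : R) : 0 < h -> (p e < 1 -> n%:R * h <= L e) ->
  x e * \sum_(k < n) (((p e)^-1 * (1 - expR (- (p e * (k.+1%:R * h))))
                 - (p e)^-1 * (1 - expR (- (p e * (k%:R * h)))))
                * expR (- (2 * (k.+1%:R * h))))
  <= mu [set w | safe eu ew (Ehat w) (fun f => Y f w) (fun f => c f w) e].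
Proof.
move=> h0 HL.
pose Sk (i : {set E} * 'I_n) :=
  if e \in i.1 then S i.1 (i.2%:R * h) (i.2.+1%:R * h) else set0.
have mSk i : measurable (Sk i) by rewrite /Sk; case: ifP => _; [exact: mS | exact: measurable0].
have sub : [set w | exists i, Sk i w] `<=`
           [set w | safe eu ew (Ehat w) (fun f => Y f w) (fun f => c f w) e].
  move=> w [[F k]]; rewrite /Sk /=; case: ifP => eF // [EF [Ie HA]] /=.
  apply: safe_suff; first by rewrite EF.
  move=> f fd fF cf; move: Ie => /andP[_ Ie].
  apply: le_lt_trans Ie (HA f _ cf); by rewrite inE fd -EF fF.
have mU : measurable [set w | exists i, Sk i w] by apply: mexists => i; exact: mSk.
apply: le_trans (mu_le P _ _ mU m_safe sub).
have HU : mu [set w | exists i, Sk i w] = \sum_i mu (Sk i).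
  apply: mu_sumU => //.
  - move=> [F k] [G j] w; rewrite /Sk /=.
    case: ifP => _ //; case: ifP => _ // [EF [Ie _]] [EG [Je _]].
    have kj := interval_unique _ _ _ _ h0 Ie Je.
    by rewrite -EF -EG; congr pair; apply: val_inj.
rewrite HU.
rewrite -(pair_bigA _ (fun F k => mu (Sk (F, k)))) /=.
pose D (k : 'I_n) := mu [set w | Y e w \in `]k%:R * h, k.+1%:R * h]].
apply: (@le_trans _ _ (\sum_(F : {set E}) \sum_(k < n)
     (if e \in F then mu [set w | Ehat w = F] *
        (D k * expR (- (k.+1%:R * h * s F))) else 0))); last first.
  apply: ler_sum => F _; apply: ler_sum => k _; rewrite /Sk /=.
  case: ifP => eF; last by rewrite /Prob.mu measure0.
  apply: S_lb; apply/andP; split; first by rewrite mulr_ge0 // ltW.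
  by apply: ler_wpM2r; [exact: ltW | rewrite ler_nat].
rewrite exchange_big /=.
apply: (@le_trans _ _ (\sum_(k < n) D k *
   (expR (- (2 * (k.+1%:R * h))) * x e))); last first.
  apply: ler_sum => k _.
  have -> : \sum_(F : {set E}) (if e \in F then mu [set w | Ehat w = F] *
          (D k * expR (- (k.+1%:R * h * s F))) else 0) =
        D k * \sum_(F : {set E}) (if e \in F then mu [set w | Ehat w = F] *
          expR (- (k.+1%:R * h * s F)) else 0).
    rewrite mulr_sumr; apply: eq_bigr => F _; case: ifP => _; last by rewrite mulr0.
    by rewrite mulrCA.
  apply: ler_wpM2l; first exact: mu_ge0.
  by apply: jensen; apply: mulr_ge0; [exact: ler0n | exact: ltW].
rewrite mulr_sumr le_eqVlt; apply/orP; left; apply/eqP.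
apply: eq_bigr => k _; rewrite /D Delta_eq //; ring.
Qed.

End Main.

Lemma le_eps (R : realType) (a b C : R) :
  (forall m : nat, a - C / (m.+1)%:R <= b) -> a <= b.
Proof.
move=> H; rewrite leNgt; apply/negP => ba.
have ab0 : 0 < a - b by rewrite subr_gt0.
set t := Num.Def.truncn (`|C| / (a - b)).
have HM := truncnS_gt (`|C| / (a - b)); rewrite -/t in HM.
have M0 : 0 < (t.+1)%:R :> R by rewrite ltr0n.
have : C / (t.+1)%:R < a - b.
  apply: le_lt_trans (_ : `|C| / (t.+1)%:R < a - b).
    by apply: ler_wpM2r; [rewrite invr_ge0 ltW | exact: ler_norm].
  by rewrite ltr_pdivrMr // mulrC -ltr_pdivrMr.
move=> H1; have H2 := H t; set z := C / _ in H1 H2; lra.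
Qed.

Theorem lemma2 (R : realType) (V E : finType) (side : V -> bool)
  (eu ew : E -> V)
  (Hbip : forall e, side (eu e) = false /\ side (ew e) = true)
  (Hsimple : forall e f, eu e = eu f -> ew e = ew f -> e = f)
  (p : E -> R) (Hp : forall e, 0 < p e <= 1)
  (t : V -> nat) (x : E -> R)
  (Hx1 : forall v, \sum_(e in delta_v eu ew v) p e * x e <= 1)
  (Hx2 : forall v, \sum_(e in delta_v eu ew v) x e <= (t v)%:R)
  (Hx3 : forall e, 0 <= x e <= 1)
  (d : measure_display) (Omega : measurableType d) (P : probability Omega R)
  (Ehat : Omega -> {set E}) (Y : E -> Omega -> R) (c : E -> Omega -> bool)
  (HEm : forall F : {set E}, measurable [set w | Ehat w = F])
  (HYm : forall e, measurable_fun setT (Y e))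
  (Hcm : forall e b, measurable [set w | c e w = b])
  (Hmarg : forall e, P [set w | e \in Ehat w] = (x e)%:E)
  (Hnc : forall (v : V) (S : {set E}) (b : bool), S \subset delta_v eu ew v ->
     fine (P [set w | forall f, f \in S -> (f \in Ehat w) = b])
       <= \prod_(f in S) fine (P [set w | (f \in Ehat w) = b]))
  (HYdist : forall e (y : R), 0 <= y ->
     (p e < 1 -> y <= (p e)^-1 * ln (1 - p e)^-1) ->
     P [set w | Y e w <= y] = ((p e)^-1 * (1 - expR (- (p e * y))))%:E)
  (Hc : forall e, P [set w | c e w = true] = (p e)%:E)
  (Hindep : forall (F : {set E}) (B : E -> set R) (b : E -> bool),
     (forall f, measurable (B f)) ->
     P [set w | Ehat w = F /\ (forall f, B f (Y f w)) /\ (forall f, c f w = b f)]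
     = (fine (P [set w | Ehat w = F])
        * \prod_f fine (P [set w | B f (Y f w)])
        * \prod_f fine (P [set w | c f w = b f]))%:E)
  (e : E) (He : 0 < fine (P [set w | e \in Ehat w])) :
  g (p e) <=
    fine (P [set w | safe eu ew (Ehat w) (fun f => Y f w) (fun f => c f w) e])
    / fine (P [set w | e \in Ehat w]).
Proof.
set q := p e.
set ratio := _ / _.
have xeE : fine (P [set w | e \in Ehat w]) = x e by rewrite Hmarg.
rewrite xeE in He.
have /andP[q0 q1] := Hp e.
have key : forall (n : nat) (h : R), 0 < h -> (q < 1 -> n%:R * h <= q^-1 * ln (1 - q)^-1) ->
    expR (- ((q + 2) * h)) * (1 - expR (- ((q + 2) * (n%:R * h)))) / (q + 2) <= ratio.
  move=> n h h0 HL.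
  rewrite /ratio xeE ler_pdivlMr // mulrC.
  apply: le_trans (@main_lb R V E eu ew p Hp x d Omega P Ehat Y c HEm HYm Hcm Hmarg
            HYdist Hc Hindep Hx1 Hx3 Hnc e n h h0 HL).
  apply: ler_wpM2l; first exact: ltW.
  exact: final_sum.
have [ql1|qe1] := ltP q 1.
  set Lq := q^-1 * ln (1 - q)^-1.
  have Lq0 : 0 < Lq.
    rewrite mulr_gt0 ?invr_gt0 // ln_gt0 // invf_gt1 ?subr_gt0 //.
    by rewrite gtrDl oppr_lt0.
  have gE : g q = (2 + q)^-1 * (1 - expR (- ((q + 2) * Lq))).
    rewrite /g (lt_eqF ql1) /Lq; congr (_ * (1 - expR (- _))).
    by rewrite mulrA addrC.
  have g0 : 0 <= g q.
    rewrite gE; apply: mulr_ge0; first by rewrite invr_ge0 addr_ge0 // ltW.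
    rewrite subr_ge0 -expR0 ler_expR oppr_le0; apply: mulr_ge0; last exact: ltW.
    by rewrite addr_ge0 // ltW.
  apply: (@le_eps R _ _ (g q * ((q + 2) * Lq))) => m.
  set n := m.+1.
  have n0 : 0 < n%:R :> R by rewrite ltr0n.
  have h0 : 0 < Lq / n%:R by rewrite divr_gt0.
  have := key n (Lq / n%:R) h0.
  have nh : n%:R * (Lq / n%:R) = Lq by rewrite mulrC -mulrA mulVf ?mulr1 // gt_eqF.
  rewrite nh => /(_ (fun _ => lexx _)) H.
  apply: le_trans H.
  have := expR_ge1Dx (- ((q + 2) * (Lq / n%:R))).
  set E1 := expR _ => HE1.
  have -> : g q * ((q + 2) * Lq) / n%:R = g q * ((q + 2) * (Lq / n%:R)) by rewrite !mulrA.
  have -> : E1 * (1 - expR (- ((q + 2) * Lq))) / (q + 2) = E1 * g q.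
    by rewrite gE (addrC 2 q); field; rewrite gt_eqF // addr_gt0.
  set T := (q + 2) * (Lq / n%:R) in HE1 *.
  have : g q * (1 - T) <= g q * E1 by apply: ler_wpM2l.
  by rewrite mulrBr mulr1 [E1 * _]mulrC.
have qE : q = 1 by apply/eqP; rewrite eq_le q1 qe1.
have gE : g q = 3^-1 by rewrite /g qE eqxx.
rewrite gE.
apply: (@le_eps R _ _ (4 / 3)) => m.
set M := (m.+1)%:R : R.
have M1 : 1 <= M by rewrite ler1n.
have M0 : 0 < M by lra.
have h0 : 0 < M^-1 by rewrite invr_gt0.
have := key (m.+1 * m.+1)%N M^-1 h0.
rewrite qE ltxx => /(_ (fun H => ltac:(discriminate H))).
have -> : (1 + 2) = 3 :> R by [].
have -> : (m.+1 * m.+1)%:R / M = M by rewrite natrM -/M mulfK // gt_eqF.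
move=> H.
apply: le_trans H.
have E1b := expR_ge1Dx (- (3 / M)).
have E2b : expR (- (3 * M)) <= M^-1.
  rewrite expRN lef_pV2 ?posrE ?expR_gt0 //.
  have := expR_ge1Dx (3 * M); lra.
have E2p : 0 < expR (- (3 * M)) by rewrite expR_gt0.
have E1p : 0 < expR (- (3 / M)) by rewrite expR_gt0.
have iM : M^-1 <= 1 by rewrite invf_le1.
rewrite (_ : 4 / 3 / M = 4 / 3 * M^-1) // (_ : 3 / M = 3 * M^-1) // in E1b E1p *.
move: E1b E1p E2b E2p iM h0.
set iv := M^-1; set E1 := expR _; set E2 := expR _.
move=> E1b E1p E2b E2p iM iv0.
have h1 : E1 * (1 - iv) <= E1 * (1 - E2) by apply: ler_wpM2l; lra.
have h2 : (1 - 3 * iv) * (1 - iv) <= E1 * (1 - iv) by apply: ler_wpM2r; lra.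
nra.
Qed.
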